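(* Let $\kappa$ be a regular cardinal with $\kappa\ge\aleph_2$. If there is a $(\kappa\times\omega_1)$-Prikry matrix, then $\binom{\kappa}{\aleph_1}\nrightarrow\binom{\aleph_0}{\aleph_1}_2$.
   Context: Work in ZFC. For a regular $\kappa\ge\aleph_2$, a $(\kappa\times\omega_1)$-Prikry matrix is a family $(A_{\alpha,\eta}:\alpha\in\kappa,\eta\in\omega_1)$ of subsets of $\omega_1$ such that: (i) for every $\alpha\in\kappa$ and $\zeta<\eta<\omega_1$, $A_{\alpha,\zeta}\cap A_{\alpha,\eta}=\varnothing$; (ii) for every $\alpha\in\kappa$, $\bigcup_{\eta\in\omega_1}A_{\alpha,\eta}=\omega_1$; (iii) for every sequence of pairwise distinct $\alpha_n\in\kappa$ ($n\in\omega$) and every sequence $(\eta_n:n\in\omega)$ of elements of $\omega_1$ (repetitions allowed), $|\omega_1\setminus\bigcup_{n\in\omega}A_{\alpha_n,\eta_n}|\le\aleph_0$. The relation $\binom{\lambda}{\kappa}\rightarrow\binom{\alpha}{\beta}_\chi$ means: for every $c:\lambda\times\kappa\rightarrow\chi$ there are $A\subseteq\lambda$, $B\subseteq\kappa$ with ${\rm otp}(A)=\alpha$, ${\rm otp}(B)=\beta$ and $c\upharpoonright(A\times B)$ constant; $\nrightarrow$ is its negation. *)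

(* Defs.v *)
(* Ordinals/cardinals are represented by well-ordered types. *)
From Stdlib Require Import Arith Wellfounded.

Definition is_well_order {T : Type} (lt : T -> T -> Prop) : Prop :=
  (forall x, ~ lt x x) /\
  (forall x y z, lt x y -> lt y z -> lt x z) /\
  (forall x y, lt x y \/ x = y \/ lt y x) /\
  well_founded lt.

Definition countable_set {T : Type} (P : T -> Prop) : Prop :=
  exists f : T -> nat, forall x y, P x -> P y -> f x = f y -> x = y.

(* (W, lt) is (order-isomorphic to) omega_1: a well-order which is uncountable
   while all its proper initial segments are countable. *)
Definition is_omega1 {W : Type} (lt : W -> W -> Prop) : Prop :=
  is_well_order lt /\
  ~ countable_set (fun _ : W => True) /\
  (forall y : W, countable_set (fun x => lt x y)).

(* (K, ltK) is (order-isomorphic to) a regular cardinal kappa >= aleph_2,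
   where (W, ltW) is omega_1:
   - well-order;
   - initial ordinal: K does not inject into any proper initial segment;
   - kappa >= aleph_2: K does not inject into omega_1;
   - regular: every cofinal subset of K has cardinality kappa. *)
Definition is_regular_cardinal_ge_aleph2 {K W : Type}
  (ltK : K -> K -> Prop) (ltW : W -> W -> Prop) : Prop :=
  is_well_order ltK /\
  (forall y : K, ~ exists f : K -> K,
       (forall x, ltK (f x) y) /\ (forall x x', f x = f x' -> x = x')) /\
  (~ exists f : K -> W, forall x x', f x = f x' -> x = x') /\
  (forall S : K -> Prop, (forall x, exists y, S y /\ ~ ltK y x) ->
     exists f : K -> K, (forall x, S (f x)) /\ (forall x x', f x = f x' -> x = x')).

Definition prikry_matrix {K W : Type} (ltW : W -> W -> Prop)
  (A : K -> W -> W -> Prop) : Prop :=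
  (forall a z e x, ltW z e -> A a z x -> A a e x -> False) /\
  (forall a x, exists e, A a e x) /\
  (forall (al : nat -> K) (et : nat -> W),
     (forall n m, al n = al m -> n = m) ->
     countable_set (fun x => ~ exists n, A (al n) (et n) x)).

Definition otp_omega {K : Type} (ltK : K -> K -> Prop) (X : K -> Prop) : Prop :=
  exists f : nat -> K, (forall n m, n < m -> ltK (f n) (f m)) /\
    (forall x, X x <-> exists n, f n = x).

Definition otp_omega1 {W : Type} (ltW : W -> W -> Prop) (Y : W -> Prop) : Prop :=
  exists g : W -> W, (forall a b, ltW a b -> ltW (g a) (g b)) /\
    (forall y, Y y <-> exists a, g a = y).

Definition not_polarized_arrow {K W : Type}
  (ltK : K -> K -> Prop) (ltW : W -> W -> Prop) : Prop :=
  exists c : K -> W -> bool,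
    forall (X : K -> Prop) (Y : W -> Prop),
      otp_omega ltK X -> otp_omega1 ltW Y ->
      ~ exists i : bool, forall x y, X x -> Y y -> c x y = i.

(* Main.v *)
Require Import Defs.
From Stdlib Require Import Classical ClassicalEpsilon Arith PeanoNat.

Theorem claim2p3 (K W : Type) (ltK : K -> K -> Prop) (ltW : W -> W -> Prop) :
  is_omega1 ltW ->
  is_regular_cardinal_ge_aleph2 ltK ltW ->
  (exists A : K -> W -> W -> Prop, prikry_matrix ltW A) ->
  not_polarized_arrow ltK ltW.
Proof.
  intros [[Wirr [Wtr [Wtri Wwf]]] [Wunc _]] [[Kirr _] _] [A [Hdis [Hcov Hpr]]].
  assert (Htwo : exists e0 e1 : W, e0 <> e1).
  { apply NNPP; intro Hn. apply Wunc. exists (fun _ => 0). intros x y _ _ _.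
    apply NNPP; intro Hxy; apply Hn; eauto. }
  destruct Htwo as [e0 [e1 He]].
  assert (Hd : forall a x, A a e0 x -> A a e1 x -> False).
  { intros a x H0 H1. destruct (Wtri e0 e1) as [H|[H|H]].
    - eapply Hdis; eauto.
    - contradiction.
    - eapply Hdis; eauto. }
  exists (fun a x => if excluded_middle_informative (A a e0 x) then true else false).
  intros X Y [f [Hf HX]] [g [Hg HY]] [i Hi].
  assert (finj : forall n m, f n = f m -> n = m).
  { intros n m E. destruct (Nat.lt_trichotomy n m) as [H|[H|H]]; auto.
    - apply Hf in H. rewrite E in H. destruct (Kirr _ H).
    - apply Hf in H. rewrite E in H. destruct (Kirr _ H). }
  assert (ginj : forall a b, g a = g b -> a = b).
  { intros a b E. destruct (Wtri a b) as [H|[H|H]]; auto.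
    - apply Hg in H. rewrite E in H. destruct (Wirr _ H).
    - apply Hg in H. rewrite E in H. destruct (Wirr _ H). }
  assert (Key : forall e, exists n a, A (f n) e (g a)).
  { intro e. destruct (Hpr f (fun _ => e) finj) as [h Hh].
    apply NNPP; intro Hn. apply Wunc. exists (fun a => h (g a)).
    intros a b _ _ E. apply ginj. apply Hh; auto.
    - intros [n Hn']. apply Hn; eauto.
    - intros [n Hn']. apply Hn; eauto. }
  destruct i.
  - destruct (Key e1) as [n [a H1]].
    specialize (Hi (f n) (g a)).
    destruct (excluded_middle_informative (A (f n) e0 (g a))) as [H0|H0].
    + eapply Hd; eauto.
    + discriminate Hi; [apply HX; eauto | apply HY; eauto].
  - destruct (Key e0) as [n [a H0]].
    specialize (Hi (f n) (g a)).
    destruct (excluded_middle_informative (A (f n) e0 (g a))) as [H|H].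
    + discriminate Hi; [apply HX; eauto | apply HY; eauto].
    + contradiction.
Qed.
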